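(* Let $W$ be a subset of a metric space $(X,d)$ and suppose that the density $\operatorname{den}(W)$ is a cardinal of uncountable cofinality. Then there exists $\varepsilon_0>0$ such that for all $\varepsilon\in\,]0,\varepsilon_0[$, $$\hat{\mathcal N}^X_\varepsilon(W)=\hat{\mathcal N}_\varepsilon(W)=\hat{\mathcal M}_\varepsilon(W)=\mathcal M^*_\varepsilon(W)=\operatorname{den}(W).$$
   Context: $\operatorname{den}(W)$ is the minimal cardinality of a dense subset of the metric subspace $W$. The cofinality of a cardinal (initial ordinal) $\beta$ is the least ordinal $\alpha$ admitting a strictly increasing map $f:\alpha\to\beta$ whose range is cofinal in $\beta$. Closed balls: $B(c,r)=\{x:d(x,c)\le r\}$; $C$ is an $\varepsilon$-net for $W$ if $W\subseteq\bigcup_{c\in C}B(c,\varepsilon)$; $A$ is $\varepsilon$-distinguishable if $d(x,y)>\varepsilon$ for distinct $x,y\in A$. $\hat{\mathcal N}^A_\varepsilon(W)$ is the minimal cardinality of an $\varepsilon$-net $C\subseteq A$ for $W$; $\hat{\mathcal N}_\varepsilon(W):=\hat{\mathcal N}^W_\varepsilon(W)$; $\hat{\mathcal M}_\varepsilon(W)$ is the smallest cardinality of an $\varepsilon$-distinguishable $A\subseteq W$ that is maximal under inclusion among $\varepsilon$-distinguishable subsets of $W$; $\mathcal M^*_\varepsilon(W)$ is the smallest cardinal $\ge\operatorname{card}(A)$ for every $\varepsilon$-distinguishable $A\subseteq W$. *)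

(* Defs.v *)
From Stdlib Require Import Reals.
Open Scope R_scope.

Definition card_le (A B : Type) : Prop :=
  exists f : A -> B, forall x y, f x = f y -> x = y.
Definition card_eq (A B : Type) : Prop :=
  exists (f : A -> B) (g : B -> A), (forall x, g (f x) = x) /\ (forall y, f (g y) = y).
Definition card_lt (A B : Type) : Prop := card_le A B /\ ~ card_le B A.
Definition countable (A : Type) : Prop := card_le A nat.

Definition subset_of {X : Type} (P : X -> Prop) : Type := {x : X | P x}.
Definition included {X : Type} (P Q : X -> Prop) : Prop := forall x, P x -> Q x.

Section Metric.
Variable M : Metric_Space.
Notation X := (Base M).
Notation d := (dist M).

Definition dense_in (W D : X -> Prop) : Prop :=
  included D W /\
  forall x, W x -> forall r, 0 < r -> exists y, D y /\ d x y < r.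

(* K has cardinality den(W): the minimal cardinality of a dense subset of W *)
Definition is_den (W : X -> Prop) (K : Type) : Prop :=
  exists D, dense_in W D /\ card_eq K (subset_of D) /\
    forall D', dense_in W D' -> card_le (subset_of D) (subset_of D').

Definition is_net (A W : X -> Prop) (eps : R) (C : X -> Prop) : Prop :=
  included C A /\ forall w, W w -> exists c, C c /\ d w c <= eps.

Definition is_Nhat (A W : X -> Prop) (eps : R) (K : Type) : Prop :=
  exists C, is_net A W eps C /\ card_eq K (subset_of C) /\
    forall C', is_net A W eps C' -> card_le (subset_of C) (subset_of C').

Definition distinguishable (W : X -> Prop) (eps : R) (A : X -> Prop) : Prop :=
  included A W /\ forall x y, A x -> A y -> x <> y -> eps < d x y.

Definition maximal_distinguishable (W : X -> Prop) (eps : R) (A : X -> Prop) : Prop :=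
  distinguishable W eps A /\
  forall A', distinguishable W eps A' -> included A A' -> included A' A.

Definition is_Mhat (W : X -> Prop) (eps : R) (K : Type) : Prop :=
  exists A, maximal_distinguishable W eps A /\ card_eq K (subset_of A) /\
    forall A', maximal_distinguishable W eps A' -> card_le (subset_of A) (subset_of A').

Definition is_Mstar (W : X -> Prop) (eps : R) (K : Type) : Prop :=
  (forall A, distinguishable W eps A -> card_le (subset_of A) K) /\
  (forall T : Type,
     (forall A, distinguishable W eps A -> card_le (subset_of A) T) -> card_le K T).

End Metric.

Definition strict_wellorder {T : Type} (R0 : T -> T -> Prop) : Prop :=
  (forall x y z, R0 x y -> R0 y z -> R0 x z) /\
  (forall x y, R0 x y \/ x = y \/ R0 y x) /\
  well_founded R0.

Definition initial_ordinal {B : Type} (Rb : B -> B -> Prop) : Prop :=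
  strict_wellorder Rb /\ forall b, card_lt {y : B | Rb y b} B.

Definition uncountable_cofinality {B : Type} (Rb : B -> B -> Prop) : Prop :=
  forall (A : Type) (Ra : A -> A -> Prop) (f : A -> B),
    strict_wellorder Ra -> countable A ->
    (forall a a', Ra a a' -> Rb (f a) (f a')) ->
    ~ (forall b, exists a, b = f a \/ Rb b (f a)).

(* Main.v *)
Require Import Defs.
From Stdlib Require Import Reals Classical ClassicalEpsilon FunctionalExtensionality PropExtensionality ProofIrrelevance Arith Lia Lra Cantor.
Open Scope nat_scope.

Lemma card_le_refl A : card_le A A.
Proof. exists (fun x => x); auto. Qed.

Lemma card_le_trans A B C : card_le A B -> card_le B C -> card_le A C.
Proof. intros [f Hf] [g Hg]; exists (fun x => g (f x)); auto. Qed.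

Lemma card_eq_le A B : card_eq A B -> card_le A B.
Proof. intros [f [g [H1 H2]]]; exists f; intros x y E. rewrite <- (H1 x), <- (H1 y), E; auto. Qed.

Lemma card_eq_le' A B : card_eq A B -> card_le B A.
Proof. intros [f [g [H1 H2]]]; exists g; intros x y E. rewrite <- (H2 x), <- (H2 y), E; auto. Qed.

Lemma sig_eq {A} (P : A -> Prop) (x y : sig P) : proj1_sig x = proj1_sig y -> x = y.
Proof. destruct x, y; simpl; intros; subst; f_equal; apply proof_irrelevance. Qed.

Section CSB.
Variables (A B : Type) (f : A -> B) (g : B -> A).
Hypothesis (Hf : forall x y, f x = f y -> x = y) (Hg : forall x y, g x = g y -> x = y).

Definition Cset (a : A) : Prop :=
  exists n a0, (~ exists b, g b = a0) /\ a = Nat.iter n (fun x => g (f x)) a0.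
Definition ginv (a : A) : B := epsilon (inhabits (f a)) (fun b => g b = a).
Definition hcsb (a : A) : B :=
  if excluded_middle_informative (Cset a) then f a else ginv a.

Lemma ginv_spec a : ~ Cset a -> g (ginv a) = a.
Proof.
  intro Hn. unfold ginv. apply epsilon_spec.
  apply NNPP; intro H. apply Hn. exists 0, a. split; auto.
Qed.

Lemma hcsb_inj x y : hcsb x = hcsb y -> x = y.
Proof.
  unfold hcsb. destruct (excluded_middle_informative (Cset x)) as [Cx|Cx];
  destruct (excluded_middle_informative (Cset y)) as [Cy|Cy]; intro E.
  - auto.
  - exfalso. apply Cy. destruct Cx as [n [a0 [H1 H2]]]. exists (S n), a0. split; auto.
    simpl. rewrite <- H2, E. symmetry; apply ginv_spec; auto.
  - exfalso. apply Cx. destruct Cy as [n [a0 [H1 H2]]]. exists (S n), a0. split; auto.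
    simpl. rewrite <- H2, <- E. symmetry; apply ginv_spec; auto.
  - rewrite <- (ginv_spec x Cx), <- (ginv_spec y Cy), E; auto.
Qed.

Lemma hcsb_surj b : exists a, hcsb a = b.
Proof.
  destruct (classic (Cset (g b))) as [C|C].
  - destruct C as [n [a0 [H1 H2]]]. destruct n as [|n].
    + exfalso. apply H1. exists b. auto.
    + simpl in H2. apply Hg in H2. exists (Nat.iter n (fun x => g (f x)) a0).
      unfold hcsb. destruct (excluded_middle_informative _) as [_|N]; auto.
      exfalso; apply N; exists n, a0; auto.
  - exists (g b). unfold hcsb. destruct (excluded_middle_informative _) as [N|_].
    + contradiction.
    + apply Hg. apply ginv_spec; auto.
Qed.

Lemma csb_eq : card_eq A B.
Proof.
  assert (inhB : forall b : B, inhabited A) by (intro b; exact (inhabits (g b))).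
  exists hcsb, (fun b => epsilon (inhB b) (fun a => hcsb a = b)). split.
  - intro x. apply hcsb_inj. apply (epsilon_spec (inhB (hcsb x)) (fun a => hcsb a = hcsb x)). eauto.
  - intro y. apply (epsilon_spec (inhB y) (fun a => hcsb a = y)). apply hcsb_surj.
Qed.
End CSB.

Lemma CSB A B : card_le A B -> card_le B A -> card_eq A B.
Proof. intros [f Hf] [g Hg]. apply (csb_eq A B f g); auto. Qed.
Open Scope nat_scope.

Section Ord.
Variables (B : Type) (Rb : B -> B -> Prop).
Hypothesis Hinit : initial_ordinal Rb.
Hypothesis Hcf : uncountable_cofinality Rb.

Let Hwo : strict_wellorder Rb := proj1 Hinit.
Lemma Rtrans x y z : Rb x y -> Rb y z -> Rb x z.
Proof. exact (proj1 Hwo x y z). Qed.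
Lemma Rtot x y : Rb x y \/ x = y \/ Rb y x.
Proof. exact (proj1 (proj2 Hwo) x y). Qed.
Lemma Rwf : well_founded Rb.
Proof. exact (proj2 (proj2 Hwo)). Qed.
Lemma Rirr x : ~ Rb x x.
Proof. induction (Rwf x) as [x _ IH]. intro H. exact (IH x H H). Qed.

Definition seg (b : B) := {y : B | Rb y b}.

Lemma Binh : inhabited B.
Proof.
  apply NNPP; intro N.
  apply (Hcf False (fun _ _ => False) (fun e : False => match e with end)).
  - split; [tauto|split]. intros []. constructor; intros ? [].
  - exists (fun e : False => match e with end). intros [].
  - intros [].
  - intro b. exfalso. apply N. constructor. exact b.
Qed.

Lemma nomax b : exists y, Rb b y.
Proof.
  apply NNPP; intro N.
  apply (Hcf unit (fun _ _ => False) (fun _ => b)).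
  - split; [tauto|split].
    + intros [] []; auto.
    + intro. constructor; intros ? [].
  - exists (fun _ => 0). intros [] [] _; auto.
  - intros ? ? [].
  - intro y. exists tt. destruct (Rtot y b) as [H|[H|H]]; auto.
    exfalso; apply N; eauto.
Qed.

Definition sB (b : B) : B :=
  epsilon (inhabits b) (fun y => Rb b y /\ forall z, Rb b z -> z = y \/ Rb y z).

Lemma least_exists (P : B -> Prop) : (exists x, P x) -> exists x, P x /\ forall y, P y -> ~ Rb y x.
Proof.
  intros [x0 H0]. apply NNPP; intro N. apply (fun H => H x0 H0).
  intro x. induction (Rwf x) as [x _ IH]. intros Px. apply N. exists x. split; auto.
  intros y Py Ry. exact (IH y Ry Py).
Qed.

Lemma sB_spec b : Rb b (sB b) /\ forall z, Rb b z -> z = sB b \/ Rb (sB b) z.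
Proof.
  unfold sB. apply epsilon_spec.
  destruct (least_exists (fun y => Rb b y) (nomax b)) as [y [H1 H2]].
  exists y. split; auto. intros z Hz. destruct (Rtot y z) as [H|[H|H]]; auto.
  exfalso; exact (H2 z Hz H).
Qed.

Lemma sB_gt b : Rb b (sB b).
Proof. apply sB_spec. Qed.
Lemma sB_least b z : Rb b z -> z = sB b \/ Rb (sB b) z.
Proof. apply sB_spec. Qed.

Lemma sB_mono x y : Rb x y -> Rb (sB x) (sB y).
Proof.
  intro H. destruct (sB_least x (sB y)) as [E|E]; auto.
  - apply (Rtrans _ y); auto. apply sB_gt.
  - exfalso. destruct (sB_least x y H) as [E2|E2].
    + subst y. apply (Rirr (sB x)). rewrite <- E at 2. apply sB_gt.
    + apply (Rirr y). apply (Rtrans _ (sB x)); [rewrite <- E; apply sB_gt | auto].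
Qed.

Lemma sB_inj x y : sB x = sB y -> x = y.
Proof.
  intro E. destruct (Rtot x y) as [H|[H|H]]; auto; exfalso.
  - apply sB_mono in H. rewrite E in H. exact (Rirr _ H).
  - apply sB_mono in H. rewrite E in H. exact (Rirr _ H).
Qed.

Definition it n x := Nat.iter n sB x.

Lemma it_mono n x y : Rb x y -> Rb (it n x) (it n y).
Proof. unfold it; induction n; simpl; auto. intro H. apply sB_mono; auto. Qed.

Lemma it_ge n x : x = it n x \/ Rb x (it n x).
Proof.
  unfold it. induction n; simpl; auto. right. destruct IHn as [E|E].
  - rewrite <- E. apply sB_gt.
  - apply (Rtrans _ _ _ E). apply sB_gt.
Qed.

Definition nonsucc l := ~ exists y, sB y = l.

Lemma decomp x : exists k l, nonsucc l /\ x = it k l.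
Proof.
  induction (Rwf x) as [x _ IH].
  destruct (classic (exists y, sB y = x)) as [[y Hy]|N].
  - subst x. destruct (IH y (sB_gt y)) as [k [l [H1 H2]]].
    exists (S k), l. split; auto. simpl. f_equal. exact H2.
  - exists 0, x. split; auto.
Qed.

Lemma decomp_uniq k l j m : nonsucc l -> nonsucc m -> it k l = it j m -> k = j /\ l = m.
Proof.
  unfold it. intros Hl Hm. revert j. induction k; intros j E; destruct j; simpl in *.
  - auto.
  - exfalso; apply Hl; eauto.
  - exfalso; apply Hm; eauto.
  - apply sB_inj in E. destruct (IHk j E); auto.
Qed.

Lemma bound_incr (c : nat -> B) : (forall n, Rb (c n) (c (S n))) -> exists b, forall n, Rb (c n) b.
Proof.
  intro Hc.
  assert (Hinc : forall a a', a < a' -> Rb (c a) (c a')).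
  { intros a a' H. induction H; auto. apply (Rtrans _ _ _ IHle); auto. }
  pose proof (Hcf nat lt c) as H.
  assert (Hw : strict_wellorder lt).
  { split; [intros; lia|split]. intros x y; destruct (lt_eq_lt_dec x y) as [[?|?]|?]; auto. apply lt_wf. }
  assert (Hcnt : countable nat) by apply card_le_refl.
  specialize (H Hw Hcnt Hinc).
  apply not_all_ex_not in H. destruct H as [b Hb]. exists b. intro n.
  destruct (Rtot (c n) b) as [H|[H|H]]; auto; exfalso; apply Hb; exists n; auto.
Qed.

Definition maxB x y := if excluded_middle_informative (Rb x y) then y else x.
Lemma maxB_l x y : x = maxB x y \/ Rb x (maxB x y).
Proof. unfold maxB; destruct (excluded_middle_informative _); auto. Qed.
Lemma maxB_r x y : y = maxB x y \/ Rb y (maxB x y).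
Proof.
  unfold maxB; destruct (excluded_middle_informative _); auto.
  destruct (Rtot x y) as [H|[H|H]]; auto; contradiction.
Qed.

Lemma le_lt_trans x y z : (x = y \/ Rb x y) -> Rb y z -> Rb x z.
Proof. intros [E|E] H; subst; auto. apply (Rtrans _ _ _ E H). Qed.

Lemma bound_any (b : nat -> B) : exists c, forall n, Rb (b n) c.
Proof.
  set (c := fix c n := match n with 0 => sB (b 0) | S n => sB (maxB (c n) (b (S n))) end).
  destruct (bound_incr c) as [z Hz].
  - intro n. apply (le_lt_trans (c n) (maxB (c n) (b (S n))) (c (S n)) (maxB_l _ _)). apply sB_gt.
  - exists z. intro n. apply (Rtrans _ (c n)); auto. destruct n; simpl.
    + apply sB_gt.
    + apply (le_lt_trans (b (S n)) (maxB (c n) (b (S n))) (c (S n)) (maxB_r _ _)). apply sB_gt.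
Qed.

Lemma omega_abs b : exists c, card_le (nat * seg b) (seg c).
Proof.
  destruct (bound_incr (fun n => it n b)) as [c Hc].
  { intro n. apply sB_gt. }
  exists c.
  set (dec := fun x : B => epsilon (inhabits (0, x)) (fun p => nonsucc (snd p) /\ x = it (fst p) (snd p))).
  assert (Hdec : forall x, nonsucc (snd (dec x)) /\ x = it (fst (dec x)) (snd (dec x))).
  { intro x. unfold dec. apply (epsilon_spec (inhabits (0, x)) (fun p => nonsucc (snd p) /\ x = it (fst p) (snd p))).
    destruct (decomp x) as [k [l H]]. exists (k, l); auto. }
  assert (Hb0 : forall j x, Rb x b -> Rb (it j (snd (dec x))) c).
  { intros j x Hx.
    destruct (Hdec x) as [_ E].
    apply (Rtrans _ (it j b)); auto. apply it_mono.
    apply (le_lt_trans _ x); auto. assert (G := it_ge (fst (dec x)) (snd (dec x))). rewrite <- E in G. exact G. }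
  assert (Hb : forall (p : nat * seg b), Rb (it (to_nat (fst p, fst (dec (proj1_sig (snd p))))) (snd (dec (proj1_sig (snd p))))) c).
  { intro p. apply Hb0. apply (proj2_sig (snd p)). }
  exists (fun p => exist (fun y => Rb y c) _ (Hb p)).
  intros [m [x Hx]] [m' [x' Hx']] E. apply (f_equal (@proj1_sig _ _)) in E. cbn [proj1_sig fst snd] in E.
  destruct (Hdec x) as [N1 E1]. destruct (Hdec x') as [N2 E2].
  destruct (decomp_uniq _ _ _ _ N1 N2 E) as [K L].
  apply (f_equal of_nat) in K. rewrite !cancel_of_to in K. injection K; intros K2 K1.
  subst m'. f_equal. apply sig_eq. simpl. rewrite E1, E2, K2, L. reflexivity.
Qed.

Lemma small_bounded (A : Type) : ~ card_le B A -> exists b, card_le A (seg b).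
Proof.
  intro HBA. apply NNPP; intro N.
  destruct Binh as [b0].
  assert (inhA : inhabited A).
  { apply NNPP; intro NA. apply N. exists b0.
    exists (fun a => False_rect _ (NA (inhabits a))). intros a; exfalso; apply NA; constructor; auto. }
  set (F := fun (x : B) (hp : forall y, Rb y x -> A) =>
              epsilon inhA (fun a => forall y (H : Rb y x), a <> hp y H)).
  set (h := Fix Rwf (fun _ => A) F).
  assert (Hh : forall x, h x = F x (fun y _ => h y)).
  { intro x. unfold h. apply (Fix_eq Rwf (fun _ => A) F). intros x0 f g Hfg.
    assert (E : f = g).
    { apply functional_extensionality_dep; intro y.
      apply functional_extensionality_dep; intro p. auto. }
    rewrite E; reflexivity. }
  assert (Key : forall x y, Rb y x -> h x <> h y).
  { intro x. rewrite Hh. unfold F.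
    apply (epsilon_spec inhA (fun a => forall y (H : Rb y x), a <> h y)).
    apply NNPP; intro NE. apply N. exists x.
    assert (Hall : forall a, exists y, Rb y x /\ a = h y).
    { intro a. apply NNPP; intro Na. apply NE. exists a. intros y Hy E. apply Na. eauto. }
    set (g := fun a => epsilon (inhabits x) (fun y => Rb y x /\ a = h y)).
    assert (Hg : forall a, Rb (g a) x /\ a = h (g a)).
    { intro a. apply (epsilon_spec (inhabits x) (fun y => Rb y x /\ a = h y)). auto. }
    exists (fun a => exist (fun y => Rb y x) (g a) (proj1 (Hg a))).
    intros a a' E. apply (f_equal (@proj1_sig _ _)) in E. simpl in E.
    rewrite (proj2 (Hg a)), (proj2 (Hg a')), E. reflexivity. }
  apply HBA. exists h. intros x y E.
  destruct (Rtot x y) as [H|[H|H]]; auto; exfalso.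
  - exact (Key y x H (eq_sym E)).
  - exact (Key x y H E).
Qed.

Lemma countable_union (A : nat -> Type) :
  (forall n, ~ card_le B (A n)) -> ~ card_le B {n : nat & A n}.
Proof.
  intros HA HU.
  assert (H1 : forall n, exists b, card_le (A n) (seg b)) by (intro n; apply small_bounded; auto).
  destruct (choice _ H1) as [bs Hbs].
  destruct (bound_any bs) as [c Hc].
  assert (H2 : forall n, exists i : A n -> seg c, forall x y, i x = i y -> x = y).
  { intro n. destruct (Hbs n) as [i Hi].
    exists (fun a => exist (fun y => Rb y c) (proj1_sig (i a)) (Rtrans _ _ _ (proj2_sig (i a)) (Hc n))).
    intros x y E. apply Hi. apply sig_eq. apply (f_equal (@proj1_sig _ _)) in E. exact E. }
  set (i := fun n => proj1_sig (constructive_indefinite_description _ (H2 n))).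
  assert (Hi : forall n x y, i n x = i n y -> x = y).
  { intro n. exact (proj2_sig (constructive_indefinite_description _ (H2 n))). }
  destruct (omega_abs c) as [c' Hc'].
  assert (Hsig : card_le {n : nat & A n} (nat * seg c)).
  { exists (fun p => (projT1 p, i (projT1 p) (projT2 p))).
    intros [n a] [n' a'] E. simpl in E. injection E; intros E2 E1. subst n'.
    apply Hi in E2. subst; reflexivity. }
  apply (proj2 (proj2 Hinit c')).
  apply (card_le_trans _ _ _ HU). apply (card_le_trans _ _ _ Hsig). exact Hc'.
Qed.
End Ord.

Definition sub {X : Type} (A C : X -> Prop) := forall x, A x -> C x.

Section Tower.
Variable X : Type.
Variable f : (X -> Prop) -> (X -> Prop).
Hypothesis f_infl : forall A x, A x -> f A x.
Hypothesis f_one : forall A x y, f A x -> ~ A x -> f A y -> ~ A y -> x = y.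
Variable good : (X -> Prop) -> Prop.
Hypothesis good_f : forall A, good A -> good (f A).
Hypothesis good_union : forall F : (X -> Prop) -> Prop, (forall A, F A -> good A) ->
  (forall A B, F A -> F B -> sub A B \/ sub B A) -> good (fun x => exists A, F A /\ A x).

Inductive tower : (X -> Prop) -> Prop :=
| t_f : forall A, tower A -> tower (f A)
| t_u : forall F : (X -> Prop) -> Prop, (forall A, F A -> tower A) -> tower (fun x => exists A, F A /\ A x).

Definition comparable C := forall A, tower A -> sub A C \/ sub C A.

Lemma lemma1 C : comparable C -> forall A, tower A -> sub A C \/ sub (f C) A.
Proof.
  intros HC A HA. induction HA as [A HA IH | F HF IH].
  - destruct IH as [IH|IH].
    + destruct (HC (f A) (t_f A HA)) as [H|H]; [left; auto|].
      destruct (classic (sub (f A) C)) as [H'|H']; [left; auto|].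
      right. apply not_all_ex_not in H'. destruct H' as [x Hx].
      assert (Hfx : f A x) by (apply NNPP; intro; apply Hx; intro; contradiction).
      assert (HCx : ~ C x) by (intro; apply Hx; auto).
      assert (E : C = A).
      { apply functional_extensionality; intro y. apply propositional_extensionality. split; auto.
        intro Cy. apply NNPP; intro Ay. assert (y = x) by (apply (f_one A); auto; intro; apply HCx; auto).
        subst; contradiction. }
      rewrite E. intros y Hy; auto.
    + right. intros y Hy. apply f_infl. auto.
  - destruct (classic (forall A, F A -> sub A C)) as [H|H].
    + left. intros x [A [HA Ax]]. eapply H; eauto.
    + right. apply not_all_ex_not in H. destruct H as [A HA].
      assert (FA : F A) by (apply NNPP; intro; apply HA; intro; contradiction).
      destruct (IH A FA) as [H|H]; [exfalso; apply HA; auto|].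
      intros x Hx. exists A; auto.
Qed.

Lemma lemma2 C : tower C -> comparable C.
Proof.
  intro HC. induction HC as [C HC IH | F HF IH]; intros A HA.
  - destruct (lemma1 C IH A HA) as [H|H]; auto.
    left. intros x Hx. apply f_infl; auto.
  - destruct (classic (forall G, F G -> sub G A)) as [H|H].
    + right. intros x [G [HG Gx]]. eapply H; eauto.
    + apply not_all_ex_not in H. destruct H as [G HG].
      assert (FG : F G) by (apply NNPP; intro; apply HG; intro; contradiction).
      destruct (IH G FG A HA) as [H|H]; [|exfalso; apply HG; auto].
      left. intros x Hx. exists G; auto.
Qed.

Lemma tower_good A : tower A -> good A.
Proof.
  intro HA. induction HA as [A HA IH | F HF IH]; auto.
  apply good_union; auto. intros A B FA FB. destruct (lemma2 A (HF A FA) B (HF B FB)); auto.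
Qed.

Lemma zorn_tower : exists U, good U /\ sub (f U) U.
Proof.
  set (U := fun x => exists A, tower A /\ A x).
  assert (TU : tower U) by (apply (t_u tower); auto).
  exists U. split. apply tower_good; auto.
  intros x Hx. exists (f U). split; auto. constructor; auto.
Qed.
End Tower.

Open Scope R_scope.
Section Met.
Variable M : Metric_Space.
Notation X := (Base M).
Notation d := (dist M).

Lemma exists_maximal (W : X -> Prop) (eps : R) : 0 <= eps -> exists A, maximal_distinguishable M W eps A.
Proof.
  intro He.
  set (P := fun A : X -> Prop => exists x, W x /\ forall a, A a -> eps < d x a).
  set (f := fun A : X -> Prop => match excluded_middle_informative (P A) with
            | left H => fun y => A y \/ y = proj1_sig (constructive_indefinite_description _ H)
            | right _ => A end).
  assert (Hf : forall A, (P A -> exists x, W x /\ (forall a, A a -> eps < d x a) /\ f A = (fun y => A y \/ y = x))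
                  /\ (~ P A -> f A = A)).
  { intro A. unfold f. destruct (excluded_middle_informative (P A)) as [H|H]; split; try tauto.
    intros _. destruct (constructive_indefinite_description _ H) as [x Hx]. simpl. exists x. tauto. }
  destruct (zorn_tower X f) with (good := distinguishable M W eps) as [U [HU1 HU2]].
  - intros A x Ax. destruct (classic (P A)) as [H|H].
    + destruct ((proj1 (Hf A)) H) as [z [_ [_ E]]]. rewrite E; auto.
    + rewrite (proj2 (Hf A) H); auto.
  - intros A x y H1 H2 H3 H4. destruct (classic (P A)) as [H|H].
    + destruct ((proj1 (Hf A)) H) as [z [_ [_ E]]]. rewrite E in H1, H3.
      destruct H1; [contradiction|]; destruct H3; [contradiction|]. congruence.
    + rewrite (proj2 (Hf A) H) in H1. contradiction.
  - intros A [HA1 HA2]. destruct (classic (P A)) as [H|H].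
    + destruct ((proj1 (Hf A)) H) as [z [Wz [Hz E]]]. rewrite E. split.
      * intros y [Ay|Ey]; [auto|subst; auto].
      * intros x y [Ax|Ex] [Ay|Ey] Nxy; subst; auto.
        -- rewrite dist_sym. auto.
        -- contradiction.
    + rewrite (proj2 (Hf A) H). split; auto.
  - intros F HF Hch. split.
    + intros x [A [FA Ax]]. apply (proj1 (HF A FA)); auto.
    + intros x y [A [FA Ax]] [A' [FA' Ay]] Nxy. destruct (Hch A A' FA FA') as [H|H].
      * apply (proj2 (HF A' FA')); auto.
      * apply (proj2 (HF A FA)); auto.
  - exists U. split; auto. intros A' [HA1 HA2] Hsub x Hx. apply NNPP; intro Ux.
    assert (PU : P U).
    { exists x. split; auto. intros a Ua. apply HA2; auto. intro; subst; contradiction. }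
    destruct ((proj1 (Hf U)) PU) as [z [Wz [Hz E]]].
    assert (Uz : U z) by (apply HU2; rewrite E; auto).
    specialize (Hz z Uz). rewrite (proj2 (dist_refl M z z) eq_refl) in Hz. lra.
Qed.
End Met.
Open Scope R_scope.

Lemma max_cover (M : Metric_Space) W eps A : 0 <= eps -> maximal_distinguishable M W eps A ->
  forall x, W x -> exists a, A a /\ dist M x a <= eps.
Proof.
  intros He [[HA1 HA2] Hmax] x Wx. apply NNPP; intro N.
  assert (Ax : A x).
  { apply (Hmax (fun y => A y \/ y = x)).
    - split.
      + intros y [Ay|Ey]; [auto|subst; auto].
      + assert (Hf : forall a, A a -> eps < dist M x a).
        { intros a Aa. apply Rnot_le_lt. intro; apply N; eauto. }
        intros y z [Ay|Ey] [Az|Ez] Nyz; subst; auto.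
        * rewrite dist_sym; auto.
        * contradiction.
    - intros y Ay; auto.
    - auto. }
  apply N. exists x. split; auto. rewrite (proj2 (dist_refl M x x) eq_refl). lra.
Qed.

Theorem theorem2p10 (M : Metric_Space) (W : Base M -> Prop)
  (B : Type) (Rb : B -> B -> Prop)
  (HB : is_den M W B) (Hinit : initial_ordinal Rb) (Hcf : uncountable_cofinality Rb) :
  exists eps0 : R, 0 < eps0 /\
    forall eps : R, 0 < eps < eps0 ->
      is_Nhat M (fun _ => True) W eps B /\
      is_Nhat M W W eps B /\
      is_Mhat M W eps B /\
      is_Mstar M W eps B.
Proof.
  destruct HB as [D [HD [HBD HminD]]].
  assert (HBle : forall D', dense_in M W D' -> card_le B (subset_of D')).
  { intros D' HD'. apply (card_le_trans _ _ _ (card_eq_le _ _ HBD)). auto. }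
  assert (Key : exists n, forall A, maximal_distinguishable M W (/ INR (S n)) A -> card_le B (subset_of A)).
  { apply NNPP; intro N.
    assert (H1 : forall n, exists A, maximal_distinguishable M W (/ INR (S n)) A /\ ~ card_le B (subset_of A)).
    { intro n. apply NNPP; intro N1. apply N. exists n. intros A HA. apply NNPP; intro N2. apply N1; eauto. }
    destruct (choice _ H1) as [As HAs].
    set (D' := fun x => exists n, As n x).
    assert (HD' : dense_in M W D').
    { split.
      - intros x [n Hx]. apply (proj1 (proj1 (proj1 (HAs n)))); auto.
      - intros x Wx r Hr. destruct (archimed_cor1 r Hr) as [k [Hk1 Hk2]].
        destruct k as [|n]; [exfalso; apply (Nat.lt_irrefl 0); auto|].
        assert (Hpos : 0 <= / INR (S n)) by (left; apply Rinv_0_lt_compat, lt_0_INR, Nat.lt_0_succ).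
        destruct (max_cover M W _ (As n) Hpos (proj1 (HAs n)) x Wx) as [a [Aa Ha]].
        exists a. split; [exists n; auto| lra]. }
    apply (countable_union B Rb Hinit Hcf (fun n => subset_of (As n)) (fun n => proj2 (HAs n))).
    apply (card_le_trans _ _ _ (HBle D' HD')).
    exists (fun p : subset_of D' => let n := proj1_sig (constructive_indefinite_description _ (proj2_sig p)) in
             existT (fun n => subset_of (As n)) n
               (exist _ (proj1_sig p) (proj2_sig (constructive_indefinite_description _ (proj2_sig p))))).
    intros x y E. apply (f_equal (fun p : {n & subset_of (As n)} => proj1_sig (projT2 p))) in E.
    simpl in E. apply sig_eq. exact E. }
  destruct Key as [n Key].
  set (k := / INR (S n)).
  assert (Hk : 0 < k) by (apply Rinv_0_lt_compat, lt_0_INR, Nat.lt_0_succ).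
  exists (k / 2). split; [lra|].
  intros eps [He1 He2].
  assert (Net : forall C, (forall w, W w -> exists c, C c /\ dist M w c <= eps) -> card_le B (subset_of C)).
  { intros C HC. destruct (exists_maximal M W k (Rlt_le _ _ Hk)) as [A' HA'].
    apply (card_le_trans _ _ _ (Key A' HA')).
    assert (Hc : forall a : subset_of A', exists c, C c /\ dist M (proj1_sig a) c <= eps).
    { intros [a Ha]. apply HC. apply (proj1 (proj1 HA')); auto. }
    set (g := fun a => constructive_indefinite_description _ (Hc a)).
    exists (fun a => exist C (proj1_sig (g a)) (proj1 (proj2_sig (g a)))).
    intros a a' E. apply (f_equal (@proj1_sig _ _)) in E. simpl in E.
    destruct (proj2_sig (g a)) as [_ H1]. destruct (proj2_sig (g a')) as [_ H2].
    apply sig_eq. apply NNPP; intro Nxy.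
    assert (T := dist_tri M (proj1_sig a) (proj1_sig a') (proj1_sig (g a))).
    assert (S := proj2 (proj1 HA') _ _ (proj2_sig a) (proj2_sig a') Nxy).
    set (z := proj1_sig (g a)) in *. set (z' := proj1_sig (g a')) in *. assert (Ez : z = z') by exact E. rewrite Ez in T, H1. rewrite (dist_sym M z') in T. fold k in S. lra. }
  assert (Up : forall A, distinguishable M W eps A -> card_le (subset_of A) B).
  { intros A [HA1 HA2].
    assert (Hc : forall a : subset_of A, exists y, D y /\ dist M (proj1_sig a) y < eps / 2).
    { intros [a Ha]. apply (proj2 HD); auto. lra. }
    set (g := fun a => constructive_indefinite_description _ (Hc a)).
    apply card_le_trans with (subset_of D); [|apply (card_eq_le' _ _ HBD)].
    exists (fun a => exist D (proj1_sig (g a)) (proj1 (proj2_sig (g a)))).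
    intros a a' E. apply (f_equal (@proj1_sig _ _)) in E. simpl in E.
    destruct (proj2_sig (g a)) as [_ H1]. destruct (proj2_sig (g a')) as [_ H2].
    apply sig_eq. apply NNPP; intro Nxy.
    assert (T := dist_tri M (proj1_sig a) (proj1_sig a') (proj1_sig (g a))).
    assert (S := HA2 _ _ (proj2_sig a) (proj2_sig a') Nxy).
    set (z := proj1_sig (g a)) in *. set (z' := proj1_sig (g a')) in *. assert (Ez : z = z') by exact E. rewrite Ez in T, H1. rewrite (dist_sym M z') in T. lra. }
  destruct (exists_maximal M W eps (Rlt_le _ _ He1)) as [A0 HA0].
  assert (Cov := max_cover M W eps A0 (Rlt_le _ _ He1) HA0).
  assert (EqA0 : card_eq B (subset_of A0)) by (apply CSB; [apply Net; auto | apply Up, HA0]).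
  assert (LeA0 : card_le (subset_of A0) B) by (apply Up, HA0).
  split; [|split; [|split]].
  - exists A0. split; [split; [intros ? ?; exact I | auto]|split; auto].
    intros C' [_ HC']. apply (card_le_trans _ _ _ LeA0). apply Net; auto.
  - exists A0. split; [split; [apply (proj1 (proj1 HA0)) | auto]|split; auto].
    intros C' [_ HC']. apply (card_le_trans _ _ _ LeA0). apply Net; auto.
  - exists A0. split; auto. split; auto. intros A' HA'.
    apply (card_le_trans _ _ _ LeA0). apply Net. apply max_cover; auto. lra.
  - split; auto. intros T HT. apply (card_le_trans _ _ _ (card_eq_le _ _ EqA0)). apply HT, HA0.
Qed.
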